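(* Let $\Gamma$ be a $d\times k$ categorical random matrix and $\mathbf U=(U_1,\dots,U_k)^\top$ a vector of iid standard uniform random variables independent of $\Gamma$. Then $\mathbf X=\Gamma\mathbf U$ has positive regression dependence (PRD).
   Context: A $d\times k$ categorical random matrix is a random matrix with entries in $\{0,1\}$ each of whose rows sums to $1$. A set $A\subseteq\mathbb R^d$ is increasing if $\mathbf x\in A$ and $\mathbf y\ge\mathbf x$ (componentwise) imply $\mathbf y\in A$. $\mathbf X=(X_1,\dots,X_d)$ has PRD if for every $i\in[d]$ and every increasing set $A\subseteq\mathbb R^d$, the function $x\mapsto\mathbb P(\mathbf X\in A\mid X_i=x)$ is increasing. *)

(* Defs.v *)
From HB Require Import structures.
From mathcomp Require Import all_boot all_order all_algebra.
From mathcomp Require Import all_classical all_reals all_analysis.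
Set Implicit Arguments. Unset Strict Implicit. Unset Printing Implicit Defensive.
Import Order.TTheory GRing.Theory Num.Theory.
Local Open Scope classical_set_scope.
Local Open Scope ring_scope.

Section defs.
Context (R : realType).

(* Borel sigma-algebra on R^d (= 'cV[R]_d): generated by the coordinate
   cylinders {x | x_i in B}, B Borel in R (product sigma-algebra). *)
Definition coord_cylinders (d : nat) : set (set 'cV[R]_d) :=
  [set S | exists (i : 'I_d) (B : set R),
      measurable B /\ S = (fun x : 'cV[R]_d => x i ord0) @^-1` B].

Definition borel_cV (d : nat) (A : set 'cV[R]_d) : Prop :=
  <<s @coord_cylinders d >> A.

Definition increasing_set (d : nat) (A : set 'cV[R]_d) : Prop :=
  forall x y : 'cV[R]_d, A x -> (forall i, x i ord0 <= y i ord0) -> A y.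

Definition categorical_matrix (d k : nat) (M : 'M[R]_(d, k)) : Prop :=
  (forall i j, M i j = 0 \/ M i j = 1) /\ (forall i, \sum_j M i j = 1).

(* P(X in A | X_i = x) is understood as a version g of the conditional
   probability given X_i, i.e. a measurable g with
   P(X in A, X_i in B) = E[ g(X_i) ; X_i in B ] for all Borel B;
   "x |-> P(X in A | X_i = x) is increasing" = some version is nondecreasing. *)
Definition PRD (dT : measure_display) (T : measurableType dT)
    (P : probability T R) (d : nat) (X : T -> 'cV[R]_d) : Prop :=
  forall (i : 'I_d) (A : set 'cV[R]_d), borel_cV A -> increasing_set A ->
    exists g : R -> R,
      [/\ {homo g : x y / x <= y}, measurable_fun setT g &
        forall B : set R, measurable B ->
          P (X @^-1` A `&` (fun t => X t i ord0) @^-1` B)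
          = (\int[P]_(t in (fun t => X t i ord0) @^-1` B) (g (X t i ord0))%:E)%E].

End defs.

(* Main.v *)
Require Import Defs.
From HB Require Import structures.
From mathcomp Require Import all_boot all_order all_algebra.
From mathcomp Require Import all_classical all_reals all_analysis.
From mathcomp Require Import measurable_realfun.
From mathcomp Require Import lra.
Import Order.TTheory GRing.Theory Num.Theory.
Local Open Scope classical_set_scope.
Local Open Scope ring_scope.

Module PRDProof.

Section uniform01.
Context (R : realType).
Definition mu01 := uniform_prob (@ltr01 R).
Lemma mu01E (B : set R) : measurable B ->
  mu01 B = lebesgue_measure (B `&` `[0%R, 1%R]).
Proof.
move=> mB; rewrite /mu01 /uniform_prob integral_uniform_pdf.
rewrite (eq_integral (fun=> 1%:E)); last first.
  move=> x; rewrite inE => -[_]; rewrite /= in_itv /= /uniform_pdf => ->.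
  by rewrite subr0 invr1.
by rewrite integral_cst ?mul1e //; exact: measurableI.
Qed.
Lemma mu01mE (B : set R) : measurable B ->
  (mu01 : measure (measurableTypeR R) R) B = lebesgue_measure (B `&` `[0%R, 1%R]).
Proof. exact: mu01E. Qed.
End uniform01.

Definition rectP {T : Type} {R : Type} {k : nat} (Bs : 'I_k -> set R)
  (V : 'I_k -> T -> R) : set T := [set t | forall j, Bs j (V j t)].

Lemma mrectP (R : realType) (dT : measure_display) (T : measurableType dT) k
  (Bs : 'I_k -> set R) (V : 'I_k -> T -> R) :
  (forall j, measurable (Bs j)) -> (forall j, measurable_fun setT (V j)) ->
  measurable (rectP Bs V).
Proof.
move=> mB mV.
have -> : rectP Bs V = \bigcap_(j in setT) (V j @^-1` Bs j).
  by apply/seteqP; split => t /= h j; [move=> _; exact: h|exact: h].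
apply: fin_bigcap_measurable; first exact: finite_finset.
move=> j _; rewrite -(setTI (_ @^-1` _)); exact: mV.
Qed.

Section fubini.
Context (R : realType) (dT : measure_display) (T : measurableType dT)
  (P : probability T R) (k : nat) (U : 'I_k -> T -> R).
Hypothesis HUmeas : forall j, measurable_fun setT (U j).
Hypothesis HUunif : forall j (B : set R), measurable B ->
        P (U j @^-1` B) = lebesgue_measure (B `&` `[0%R, 1%R]).
Hypothesis HUindep : forall B : 'I_k -> set R, (forall j, measurable (B j)) ->
        P [set t | forall j, B j (U j t)] = (\prod_j P (U j @^-1` B j))%E.
Variables (E : set T) (mE : measurable E).
Hypothesis HEindep : forall B : 'I_k -> set R, (forall j, measurable (B j)) ->
  P (E `&` [set t | forall j, B j (U j t)])
  = (P E * P [set t | forall j, B j (U j t)])%E.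
Variable c : 'I_k.

Definition Ucol t : 'cV[R]_k := \col_j U j t.
Definition Ux (x : R) t : 'cV[R]_k := \col_j (if j == c then x else U j t).
Definition phi (S : set 'cV[R]_k) (x : R) : \bar R := P [set t | S (Ux x t)].

Definition Dclass (S : set 'cV[R]_k) : Prop :=
 [/\ measurable [set t | S (Ucol t)], (forall x, measurable [set t | S (Ux x t)]),
     measurable_fun setT (phi S) &
     P (E `&` [set t | S (Ucol t)]) = (P E * \int[mu01 R]_x phi S x)%E].

Definition rects : set (set 'cV[R]_k) :=
  [set S | exists Bs : 'I_k -> set R, (forall j, measurable (Bs j)) /\
     S = [set u : 'cV[R]_k | forall j, Bs j (u j ord0)]].

Lemma Pfin (A : set T) : measurable A -> P A \is a fin_num.
Proof. by move=> mA; apply: fin_num_measure. Qed.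

Lemma rects_setI : setI_closed rects.
Proof.
move=> _ _ [B1 [m1 ->]] [B2 [m2 ->]]; exists (fun j => B1 j `&` B2 j); split.
  by move=> j; exact: measurableI.
apply/seteqP; split => u /=; first by move=> [h1 h2] j; split.
by move=> h; split => j; case: (h j).
Qed.

Lemma mVx x j : measurable_fun setT (fun t => if j == c then x else U j t).
Proof. by case: (j == c); [exact: measurable_cst|exact: HUmeas]. Qed.

Lemma rects_D : rects `<=` Dclass.
Proof.
move=> _ [Bs [mB ->]].
have eU : [set t | forall j, Bs j ((Ucol t) j ord0)] = rectP Bs U.
  by apply/seteqP; split => t /= h j; move: (h j); rewrite /Ucol mxE.
have eUx x : [set t | forall j, Bs j ((Ux x t) j ord0)] =
    rectP Bs (fun j t => if j == c then x else U j t).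
  by apply/seteqP; split => t /= h j; move: (h j); rewrite /Ux mxE.
pose Bs' j := if j == c then setT else Bs j.
have mB' j : measurable (Bs' j) by rewrite /Bs'; case: (j == c).
pose K := P (rectP Bs' U).
have phiE x : phi [set u | forall j, Bs j (u j ord0)] x = (K * (\1_(Bs c) x)%:E)%E.
  rewrite /phi eUx indicE; have [xB|xB] := boolP (x \in Bs c).
    rewrite mule1 /K; congr (P _); apply/seteqP; split => t /= h j; move: (h j);
      rewrite /Bs'; case: eqP => // -> _; by move: xB; rewrite inE.
  rewrite mule0 (_ : rectP _ _ = set0) ?measure0 //; apply/seteqP; split => t //=.
  by move=> /(_ c); rewrite eqxx => /mem_set; rewrite (negbTE xB).
have K0 : (0 <= K)%E by exact: measure_ge0.
split.
- by rewrite eU; exact: mrectP.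
- by move=> x; rewrite eUx; apply: mrectP => // j; exact: mVx.
- rewrite (_ : phi _ = fun x => (K * (\1_(Bs c) x)%:E)%E); last exact/funext.
  by apply: measurable_funeM; apply/measurable_EFinP; exact: measurable_indic.
rewrite eU HEindep //.
under eq_integral => x _ do rewrite phiE.
rewrite ge0_integralZl //; last first.
  all: try (by apply/measurable_EFinP; exact: measurable_indic).
  all: try (by move=> x _; rewrite lee_fin).
apply/measurable_EFinP. exact: (@measurable_indic _ (measurableTypeR R) R setT (Bs c) (mB c)).
rewrite (@integral_indic _ _ _ (mu01 R) setT measurableT (Bs c) (mB c)) setIT mu01mE // -(HUunif c) //.
rewrite /K /rectP !HUindep // (bigD1 c) //= [in X in _ = (_ * (X * _))%E](bigD1 c) //=.
rewrite /Bs' eqxx preimage_setT probability_setT mul1e.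
rewrite [in RHS](eq_bigr (fun j => P (U j @^-1` Bs j))); last by move=> j /negbTE ->.
by congr (_ * _)%E; rewrite muleC.
Qed.

Lemma D_setSD : setSD_closed Dclass.
Proof.
move=> A B BA [mA mAx mfA hA] [mB mBx mfB hB].
have phiDE x : phi A x = (phi (A `\` B) x + phi B x)%E.
  rewrite /phi (measureDI P (mAx x) (mBx x)).
  congr (_ + P _)%E; apply/seteqP; split => t /=; first by case.
  by move=> Bt; split => //; exact: BA.
have phiD x : phi (A `\` B) x = (phi A x - phi B x)%E.
  by rewrite phiDE addeK // Pfin.
have mfD : measurable_fun setT (phi (A `\` B)).
  rewrite (_ : phi _ = (phi A \- phi B)%E); first exact: emeasurable_funB.
  by apply/funext => x; rewrite phiD.
split => //.
- by change (measurable ([set t | A (Ucol t)] `\` [set t | B (Ucol t)]));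
    exact: measurableD.
- by move=> x; change (measurable ([set t | A (Ux x t)] `\` [set t | B (Ux x t)]));
    exact: measurableD.
have e1 : P (E `&` [set t | A (Ucol t)]) =
    (P (E `&` [set t | (A `\` B) (Ucol t)]) + P (E `&` [set t | B (Ucol t)]))%E.
  rewrite (measureDI P (measurableI _ _ mE mA) mB).
  congr (P _ + P _)%E; apply/seteqP; split => t /=.
  - by move=> [[]].
  - by move=> [? []].
  - by move=> [[]].
  - by move=> [Et Bt]; split => //; split => //; exact: BA.
have e2 : (\int[mu01 R]_x phi A x =
    \int[mu01 R]_x phi (A `\` B) x + \int[mu01 R]_x phi B x)%E.
  rewrite -ge0_integralD //.
  by apply: eq_integral => x _; exact: phiDE.
have fB : (P E * \int[mu01 R]_x phi B x)%E \is a fin_num.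
  by rewrite -hB Pfin //; exact: measurableI.
move: e1; rewrite hA hB e2 ge0_muleDr; last 2 first.
  - by apply: integral_ge0 => x _; exact: measure_ge0.
  - by apply: integral_ge0 => x _; exact: measure_ge0.
by move/(congr1 (fun z => z - P E * \int[mu01 R]_x phi B x)%E); rewrite !addeK.
Qed.

Lemma D_ndseq : ndseq_closed Dclass.
Proof.
move=> F ndF DF.
have mF n : measurable [set t | F n (Ucol t)] by case: (DF n).
have mFx n x : measurable [set t | F n (Ux x t)] by case: (DF n).
have mfF n : measurable_fun setT (phi (F n)) by case: (DF n).
have hF n : P (E `&` [set t | F n (Ucol t)]) = (P E * \int[mu01 R]_x phi (F n) x)%E.
  by case: (DF n).
have ndSx x : {homo (fun n => [set t | F n (Ux x t)]) : n m / (n <= m)%N >-> (n <= m)%O}.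
  move=> n m nm; apply/subsetPset => t /=; have := ndF n m nm.
  by move/subsetPset; apply.
have ndS : {homo (fun n => E `&` [set t | F n (Ucol t)]) : n m / (n <= m)%N >-> (n <= m)%O}.
  move=> n m nm; apply/subsetPset => t /= [Et Ft]; split => //; have := ndF n m nm.
  by move/subsetPset; apply.
have mUx x : measurable [set t | (\bigcup_n F n) (Ux x t)].
  by change (measurable (\bigcup_n [set t | F n (Ux x t)])); exact: bigcupT_measurable.
have phicvg x : (fun n => phi (F n) x) @ \oo --> phi (\bigcup_n F n) x.
  exact: (nondecreasing_cvg_mu (fun n => mFx n x) (mUx x) (ndSx x)).
have mfU : measurable_fun setT (phi (\bigcup_n F n)).
  by apply: (emeasurable_fun_cvg _ _ mfF) => x _; exact: phicvg.
split => //.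
  by change (measurable (\bigcup_n [set t | F n (Ucol t)])); exact: bigcupT_measurable.
have h1 : (fun n => P (E `&` [set t | F n (Ucol t)])) @ \oo -->
    P (E `&` [set t | (\bigcup_n F n) (Ucol t)]).
  have := nondecreasing_cvg_mu (fun n => measurableI _ _ mE (mF n)) _ ndS.
  rewrite -setI_bigcupr; apply.
  apply: measurableI => //; exact: bigcupT_measurable.
have h2 : (fun n => \int[mu01 R]_x phi (F n) x)%E @ \oo -->
    (\int[mu01 R]_x phi (\bigcup_n F n) x)%E.
  have := cvg_monotone_convergence (mu := mu01 R) measurableT (g' := fun n => phi (F n)).
  have -> : (fun x => limn (fun n => phi (F n) x)) = phi (\bigcup_n F n).
    by apply/funext => x; apply/cvg_lim => //; exact: phicvg.
  apply.
  - by move=> n; exact: mfF.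
  - by move=> n x _; exact: measure_ge0.
  - move=> x _ n m nm; apply: le_measure; rewrite ?inE //.
    by apply/subsetPset; exact: ndSx.
have h3 := cvgeZl (Pfin _ mE) h2.
rewrite (_ : (fun n => _) = (fun n => P E * \int[mu01 R]_x phi (F n) x)%E) in h1; last first.
  by apply/funext => n; exact: hF.
exact: (cvg_unique _ h1 h3).
Qed.

Lemma borel_D S : borel_cV S -> Dclass S.
Proof.
move=> hS.
have lam : lambda_system setT Dclass.
  split => //; [| exact: D_setSD | exact: D_ndseq].
  apply: rects_D; exists (fun=> setT); split => //.
  by apply/seteqP; split.
apply: (lambda_system_subset rects_setI lam rects_D) => //.
move: hS; apply: sub_smallest2r; first exact: smallest_sigma_algebra.
move=> _ [i [B [mB ->]]]; exists (fun j => if j == i then B else setT); split.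
  by move=> j; case: eqP.
apply/seteqP; split => u /=.
  by move=> h j; case: eqP => // ->.
by move=> /(_ i); rewrite eqxx.
Qed.

End fubini.

Definition Mf {R : realType} {d k : nat} (f : {ffun 'I_d -> 'I_k}) : 'M[R]_(d, k) :=
  \matrix_(r, j) (f r == j)%:R.

Lemma Mf_mul {R : realType} {d k : nat} (f : {ffun 'I_d -> 'I_k}) (u : 'cV[R]_k) r :
  (Mf f *m u) r ord0 = u (f r) ord0.
Proof.
rewrite !mxE (bigD1 (f r)) //= mxE eqxx mul1r big1 ?addr0 //.
by move=> j /negbTE; rewrite mxE eq_sym => ->; rewrite mul0r.
Qed.

Lemma Mf_inj {R : realType} {d k : nat} : injective (@Mf R d k).
Proof.
move=> f g /matrixP h; apply/ffunP => r.
have := h r (f r); rewrite !mxE eqxx; case: eqP => // _.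
by rewrite /= mulr1n mulr0n => /eqP; rewrite oner_eq0.
Qed.

Lemma cat_Mf {R : realType} {d k : nat} (M : 'M[R]_(d, k)) :
  categorical_matrix M -> exists f, M = Mf f.
Proof.
move=> [h01 hsum].
have ex r : exists j, M r j == 1.
  apply/not_existsP => hn; have := hsum r; rewrite big1 => [/eqP|j _].
    by rewrite eq_sym oner_eq0.
  by case: (h01 r j) => // /eqP /hn.
exists [ffun r => xchoose (ex r)]; apply/matrixP => r j; rewrite !mxE ffunE.
have /eqP hx := xchooseP (ex r).
case: eqP => [<-|ne] //.
case: (h01 r j) => // h1; exfalso.
have := hsum r; rewrite (bigD1 (xchoose (ex r))) //= (bigD1 j) /=; last by rewrite eq_sym; apply/eqP.
rewrite hx h1; set s := \sum_(_ < _ | _) _ => e.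
have s0 : 0 <= s by apply: sumr_ge0 => j' _; case: (h01 r j') => ->.
move/eqP: e => e; lra.
Qed.

Lemma borel_setI {R : realType} {n : nat} (X Y : set 'cV[R]_n) :
  borel_cV X -> borel_cV Y -> borel_cV (X `&` Y).
Proof.
move=> hX hY; have := smallest_sigma_algebra setT (@coord_cylinders R n); rewrite /sigma_algebra => -[h0 hC hU].
rewrite -(setCK (X `&` Y)) setCI -setTD; apply: (hC).
rewrite -bigcup2E; apply: (hU) => -[|[|m]] /=.
- by rewrite -setTD; exact: (hC).
- by rewrite -setTD; exact: (hC).
- exact: h0.
Qed.

Lemma borel_preimage {R : realType} {d k : nat} (f : {ffun 'I_d -> 'I_k})
  (A : set 'cV[R]_d) :
  borel_cV A -> borel_cV [set u : 'cV[R]_k | A (Mf f *m u)].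
Proof.
move=> hA.
pose C := [set A' : set 'cV[R]_d | borel_cV [set u : 'cV[R]_k | A' (Mf f *m u)]].
have sC : sigma_algebra setT C.
  have := smallest_sigma_algebra setT (@coord_cylinders R k); rewrite /sigma_algebra => -[h0 hC hU].
  split.
  - exact: h0.
  - by move=> X hX; exact: (hC).
  - by move=> F hF; exact: hU.
apply: (smallest_sub sC _ hA).
move=> _ [r [B [mB ->]]]; apply: sub_sigma_algebra.
exists (f r); exists B; split => //; apply/seteqP; split => u /=; by rewrite Mf_mul.
Qed.

Section main.
Context (R : realType) (dT : measure_display)
    (T : measurableType dT) (P : probability T R) (d k : nat)
    (Gamma : T -> 'M[R]_(d, k)) (U : 'I_k -> T -> R).
Hypothesis HGcat : forall t, categorical_matrix (Gamma t).
Hypothesis HGmeas : forall M : 'M[R]_(d, k), measurable (Gamma @^-1` [set M]).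
Hypothesis HUmeas : forall j, measurable_fun setT (U j).
Hypothesis HUunif : forall j (B : set R), measurable B ->
        P (U j @^-1` B) = lebesgue_measure (B `&` `[0%R, 1%R]).
Hypothesis HUindep : forall B : 'I_k -> set R, (forall j, measurable (B j)) ->
        P [set t | forall j, B j (U j t)] = (\prod_j P (U j @^-1` B j))%E.
Hypothesis HGUindep : forall (M : 'M[R]_(d, k)) (B : 'I_k -> set R),
        (forall j, measurable (B j)) ->
        P (Gamma @^-1` [set M] `&` [set t | forall j, B j (U j t)])
        = (P (Gamma @^-1` [set M]) * P [set t | forall j, B j (U j t)])%E.

Definition Ef (f : {ffun 'I_d -> 'I_k}) : set T := Gamma @^-1` [set Mf f].

Lemma Ef_disj f g : f != g -> Ef f `&` Ef g = set0.
Proof.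
move=> fg; apply/seteqP; split => t // [ef eg].
have e1 : Gamma t = Mf f := ef.
have e2 : Gamma t = Mf g := eg.
by move: e2; rewrite e1 => /Mf_inj /eqP; rewrite (negbTE fg).
Qed.

Lemma bigsetU_memP (I : eqType) (G : I -> set T) (s : seq I) t :
  (\big[setU/set0]_(i <- s) G i) t <-> exists2 i, i \in s & G i t.
Proof.
elim: s => [|a s IH]; first by rewrite big_nil; split => // -[].
rewrite big_cons; split.
  case=> [h|/IH [i iS h]]; first by exists a; rewrite ?mem_head.
  by exists i; rewrite // inE iS orbT.
case=> i; rewrite inE => /orP[/eqP -> h|iS h]; first by left.
by right; apply/IH; exists i.
Qed.

Lemma Padd (I : eqType) (G : I -> set T) (s : seq I) : uniq s ->
  (forall i, measurable (G i)) -> (forall i j, i != j -> G i `&` G j = set0) ->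
  P (\big[setU/set0]_(i <- s) G i) = (\sum_(i <- s) P (G i))%E.
Proof.
elim: s => [|a s IH] /=; first by rewrite !big_nil measure0.
move=> /andP[aS us] mG dG; rewrite !big_cons measureU //.
- by congr (_ + _)%E; exact: IH.
- by apply: bigsetU_measurable => i _; exact: mG.
apply/seteqP; split => t // [Ga /bigsetU_memP [i iS Gi]].
have ai : a != i by apply: contraNneq aS => ->.
by rewrite -(dG _ _ ai); split.
Qed.

Lemma partP (A : set T) : (forall f, measurable (Ef f `&` A)) ->
  P A = (\sum_f P (Ef f `&` A))%E.
Proof.
move=> mA; rewrite -Padd //; first last.
  all: try exact: index_enum_uniq.
  move=> f g fg; apply/seteqP; split => t // [[ef _] [eg _]].
  by rewrite -(Ef_disj _ _ fg); split.
congr (P _); apply/seteqP; split => t.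
  move=> At; have [f hf] := cat_Mf _ (HGcat t).
  by apply/bigsetU_memP; exists f; rewrite ?mem_index_enum //; split.
by move/bigsetU_memP => [f _ []].
Qed.

Lemma cover (A : set T) : A = \big[setU/set0]_f (Ef f `&` A).
Proof.
apply/seteqP; split => t.
  move=> At; have [f hf] := cat_Mf _ (HGcat t).
  by apply/bigsetU_memP; exists f; rewrite ?mem_index_enum //; split.
by move/bigsetU_memP => [f _ []].
Qed.

Lemma HEind f (B : 'I_k -> set R) : (forall j, measurable (B j)) ->
  P (Ef f `&` [set t | forall j, B j (U j t)])
  = (P (Ef f) * P [set t | forall j, B j (U j t)])%E.
Proof. exact: HGUindep. Qed.

Section fixed.
Variables (i : 'I_d) (A : set 'cV[R]_d).
Hypotheses (hA : borel_cV A) (incA : increasing_set A).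

Lemma DS f (S : set 'cV[R]_k) : borel_cV S ->
  @Dclass R dT T P k U (Ef f) (f i) S.
Proof.
exact: (@borel_D R dT T P k U HUmeas HUunif HUindep (Ef f) (HGmeas _) (HEind f) (f i) S).
Qed.

Definition preA f : set 'cV[R]_k := [set u | A (Mf f *m u)].

Lemma borel_preA f : borel_cV (preA f).
Proof. exact: borel_preimage. Qed.

Definition gf f (x : R) : R := fine (P [set t | preA f (@Ux R dT T k U (f i) x t)]).

Lemma mgfset f x : measurable [set t | preA f (@Ux R dT T k U (f i) x t)].
Proof. by case: (DS f _ (borel_preA f)). Qed.

Lemma gf_nd f : {homo gf f : x y / x <= y}.
Proof.
move=> x y xy; rewrite /gf.
have le : (P [set t | preA f (@Ux R dT T k U (f i) x t)] <=
    P [set t | preA f (@Ux R dT T k U (f i) y t)])%E.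
  rewrite le_measure ?inE //; try exact: mgfset.
  move=> t; rewrite /preA /= => h.
  apply: (incA _ _ h) => r; rewrite !Mf_mul !mxE.
  by case: eqP.
by apply: fine_le => //; apply: (@Pfin _ _ _ P); exact: mgfset.
Qed.

Lemma gf_ge0 f x : 0 <= gf f x.
Proof. by apply: fine_ge0; exact: measure_ge0. Qed.

Definition g (x : R) : R := \sum_f fine (P (Ef f)) * gf f x.

Lemma g_nd : {homo g : x y / x <= y}.
Proof.
move=> x y xy; apply: ler_sum => f _; apply: ler_wpM2l; last exact: gf_nd.
by apply: fine_ge0; exact: measure_ge0.
Qed.

Lemma g_ge0 x : 0 <= g x.
Proof.
apply: sumr_ge0 => f _; apply: mulr_ge0; last exact: gf_ge0.
by apply: fine_ge0; exact: measure_ge0.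
Qed.

Definition Xv t : 'cV[R]_d := Gamma t *m \col_j U j t.
Definition Yv t : R := Xv t i ord0.

Lemma pieceX f t : Ef f t -> Xv t = Mf f *m \col_j U j t.
Proof. by rewrite /Xv => ->. Qed.

Lemma pieceY f (B : set R) :
  Ef f `&` Yv @^-1` B = Ef f `&` U (f i) @^-1` B.
Proof.
apply/seteqP; split => t [ef h]; split => //; move: h;
  by rewrite /= /Yv (pieceX _ _ ef) Mf_mul mxE.
Qed.

Lemma lhs_eq (B : set R) : measurable B ->
  P (Xv @^-1` A `&` Yv @^-1` B)
  = (\sum_f P (Ef f) * \int[mu01 R]_(x in B) (gf f x)%:E)%E.
Proof.
move=> mB.
pose Sf f := preA f `&` [set u : 'cV[R]_k | B ((Mf f *m u) i ord0)].
have bS f : borel_cV (Sf f).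
  apply: borel_setI; first exact: borel_preA.
  apply: (borel_preimage f [set x : 'cV[R]_d | B (x i ord0)]).
  by apply: sub_sigma_algebra; exists i; exists B.
have piece f : Ef f `&` (Xv @^-1` A `&` Yv @^-1` B) =
    Ef f `&` [set t | Sf f (Ucol R dT T k U t)].
  apply/seteqP; split => t [ef h]; split => //; move: h;
    by rewrite /= /Yv /Ucol (pieceX _ _ ef).
rewrite (partP) => [|f]; last first.
  rewrite piece; apply: measurableI; first exact: HGmeas.
  by case: (DS f _ (bS f)).
apply: eq_bigr => f _; rewrite piece.
have [_ _ _ ->] := DS f _ (bS f).
congr (_ * _)%E.
rewrite [RHS]integral_mkcond; apply: eq_integral => x _.
rewrite /phi patchE; case: (boolP (x \in B)) => xB.
  rewrite /gf fineK; last by apply: (@Pfin _ _ _ P); exact: mgfset.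
  congr (P _); apply/seteqP; split => t /=; first by rewrite /Sf; case.
  move=> h; rewrite /Sf; split => //=; rewrite Mf_mul /Ux mxE eqxx.
  by move: xB; rewrite inE.
rewrite (_ : [set t | _] = set0) ?measure0 //; apply/seteqP; split => t //=; rewrite /Sf => -[_] /=.
by rewrite Mf_mul /Ux mxE eqxx => /mem_set; rewrite (negbTE xB).
Qed.


Lemma mYv : measurable_fun setT (Yv : T -> measurableTypeR R).
Proof.
move=> _ B' mB'; rewrite setTI (cover (Yv @^-1` B')).
apply: bigsetU_measurable => f _; rewrite pieceY.
apply: measurableI; first exact: HGmeas.
by rewrite -(setTI (U _ @^-1` _)); exact: HUmeas.
Qed.

Lemma sumPE : (\sum_f P (Ef f))%E = 1%E.
Proof.
rewrite -(probability_setT P) (partP setT) => [|f]; last first.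
  by rewrite setIT; exact: HGmeas.
by apply: eq_bigr => f _; rewrite setIT.
Qed.

Lemma lawY (B : set R) : measurable B -> P (Yv @^-1` B) = mu01 R B.
Proof.
move=> mB; rewrite (partP) => [|f]; last first.
  rewrite pieceY; apply: measurableI; first exact: HGmeas.
  by rewrite -(setTI (U _ @^-1` _)); exact: HUmeas.
have e f : P (Ef f `&` Yv @^-1` B) = (P (Ef f) * mu01 R B)%E.
  pose Bs j := if j == f i then B else setT.
  have mBs j : measurable (Bs j) by rewrite /Bs; case: (j == f i).
  have eU : U (f i) @^-1` B = [set t | forall j, Bs j (U j t)].
    apply/seteqP; split => t /=.
      by move=> h j; rewrite /Bs; case: eqP => // ->.
    by move=> /(_ (f i)); rewrite /Bs eqxx.
  rewrite pieceY eU HEind // -eU HUunif // -mu01E //.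
rewrite (eq_bigr (fun f => P (Ef f) * mu01 R B)%E); last by move=> f _; exact: e.
by rewrite -ge0_sume_distrl ?sumPE ?mul1e // => f _; exact: measure_ge0.
Qed.


Lemma rhs_eq (B : set R) : measurable B ->
  (\int[P]_(t in Yv @^-1` B) (g (Yv t))%:E)%E
  = (\sum_f P (Ef f) * \int[mu01 R]_(x in B) (gf f x)%:E)%E.
Proof.
move=> mB.
have mg : measurable_fun B (fun y : measurableTypeR R => (g y)%:E).
  apply/measurable_EFinP; apply: nondecreasing_measurable => //; exact: g_nd.
rewrite -(@ge0_integral_pushforward _ _ _ _ _ _ mYv P B (fun y => (g y)%:E) mB mg); last first.
  by move=> y _; rewrite lee_fin; exact: g_ge0.
rewrite (eq_measure_integral (mu01 R)); last first.
  by move=> mY A' mA' _; exact: lawY.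
1: exact: mYv.
have mgf f : measurable_fun B (fun y : measurableTypeR R => (gf f y)%:E).
  apply/measurable_EFinP; apply: nondecreasing_measurable => //; exact: gf_nd.
have e y : (g y)%:E = (\sum_f (P (Ef f) * (gf f y)%:E))%E.
  rewrite /g -sumEFin; apply: eq_bigr => f _.
  by rewrite EFinM fineK //; apply: (@Pfin _ _ _ P); exact: HGmeas.
under eq_integral => y _ do rewrite e.
rewrite ge0_integral_sum //; last 2 first.
  - by move=> f; exact: (measurable_funeM _ (mgf f)).
  - by move=> f y _; rewrite mule_ge0 // ?lee_fin ?gf_ge0 //; exact: measure_ge0.
apply: eq_bigr => f _; rewrite ge0_integralZl //.
- exact: mgf.
- by move=> y _; rewrite lee_fin gf_ge0.
Qed.

End fixed.

Lemma PRD_main : PRD P (fun t => Gamma t *m \col_j U j t).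
Proof.
move=> i A hA incA; exists (g i A); split.
- exact: g_nd.
- by apply: nondecreasing_measurable => //; exact: g_nd.
- move=> B mB.
  have := lhs_eq _ _ hA _ mB; rewrite /Xv /Yv => ->.
  by have := rhs_eq _ _ hA incA _ mB; rewrite /Yv /Xv => ->.
Qed.

End main.
End PRDProof.

Theorem proposition9 (R : realType) (dT : measure_display)
    (T : measurableType dT) (P : probability T R) (d k : nat)
    (Gamma : T -> 'M[R]_(d, k)) (U : 'I_k -> T -> R)
    (* Gamma is a categorical random matrix *)
    (HGcat : forall t, categorical_matrix (Gamma t))
    (HGmeas : forall M : 'M[R]_(d, k), measurable (Gamma @^-1` [set M]))
    (* U_1, ..., U_k are random variables ... *)
    (HUmeas : forall j, measurable_fun setT (U j))
    (* ... each standard uniform on [0,1] ... *)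
    (HUunif : forall j (B : set R), measurable B ->
        P (U j @^-1` B) = lebesgue_measure (B `&` `[0%R, 1%R]))
    (* ... mutually independent ... *)
    (HUindep : forall B : 'I_k -> set R, (forall j, measurable (B j)) ->
        P [set t | forall j, B j (U j t)] = (\prod_j P (U j @^-1` B j))%E)
    (* ... and the vector U is independent of Gamma *)
    (HGUindep : forall (M : 'M[R]_(d, k)) (B : 'I_k -> set R),
        (forall j, measurable (B j)) ->
        P (Gamma @^-1` [set M] `&` [set t | forall j, B j (U j t)])
        = (P (Gamma @^-1` [set M]) * P [set t | forall j, B j (U j t)])%E) :
  PRD P (fun t => Gamma t *m \col_j U j t).
Proof.
exact: (@PRDProof.PRD_main R dT T P d k Gamma U HGcat HGmeas HUmeas HUunif HUindep HGUindep).
Qed.
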